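(* Let $(a_n)_{n\ge1}$ be an integer sequence such that $a_1=0$, $p\mid a_p$ for every prime $p$, and $a_n=a_{\operatorname{rad}(n)}$ for all $n>1$. Then $(a_n)$ is an Euler–Gauss sequence, i.e. $A_n^+\equiv A_n^-\pmod n$ for all $n\ge1$.
   Context: $\mu$ is the Möbius function and $\operatorname{rad}(n)=\prod_{p\mid n,\,p\text{ prime}}p$. For $n\ge1$, $A_n^+=\prod_{d\mid n,\ \mu(d)=1} a_{n/d}$ and $A_n^-=\prod_{d\mid n,\ \mu(d)=-1} a_{n/d}$ (empty products equal $1$). *)

(* Defs.v *)
From mathcomp Require Import all_boot all_order all_algebra.
From mathcomp Require Import intdiv.
Set Implicit Arguments. Unset Strict Implicit. Unset Printing Implicit Defensive.
Import GRing.Theory Num.Theory.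
Local Open Scope ring_scope.

Definition squarefree (n : nat) : bool :=
  (0 < n)%N && all (fun p => logn p n == 1%N) (primes n).

Definition moebius (n : nat) : int :=
  if squarefree n then (-1) ^+ size (primes n) else 0.

Definition radical (n : nat) : nat := \prod_(p <- primes n) p.

(* A_n^+ and A_n^- for an integer sequence a (indexed by nat; a 0 unused) *)
Definition Aplus (a : nat -> int) (n : nat) : int :=
  \prod_(d <- divisors n | moebius d == 1) a (n %/ d)%N.

Definition Aminus (a : nat -> int) (n : nat) : int :=
  \prod_(d <- divisors n | moebius d == -1) a (n %/ d)%N.

(* Main.v *)
Require Import Defs.
From mathcomp Require Import all_boot all_order all_algebra.
From mathcomp Require Import intdiv.
Local Open Scope ring_scope.

Section Helpers.
Local Open Scope nat_scope.

Lemma sqf_gt0 {d} : squarefree d -> 0 < d.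
Proof. by case/andP. Qed.

Lemma sqf_moeb {d} : moebius d != 0%R -> squarefree d.
Proof. by rewrite /moebius; case: ifP => //; rewrite eqxx. Qed.

Lemma sqf_div {d q} : squarefree d -> prime q -> q %| d -> ~~ (q %| d %/ q).
Proof.
move=> sd pq qd; apply/negP => qdq.
have d0 := sqf_gt0 sd.
have qqd : q ^ 2 %| d.
  by rewrite -(divnK qd) expnS expn1 mulnC dvdn_mul.
rewrite pfactor_dvdn // in qqd.
case/andP: sd => _ /allP /(_ q).
by rewrite mem_primes pq d0 qd => /(_ isT) /eqP l1; rewrite l1 in qqd.
Qed.

Lemma primes_Mq {d q} : prime q -> 0 < d -> ~~ (q %| d) ->
  perm_eq (primes (d * q)) (q :: primes d).
Proof.
move=> pq d0 nqd; apply: uniq_perm.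
- exact: primes_uniq.
- by rewrite /= primes_uniq mem_primes (negbTE nqd) !andbF.
move=> p; rewrite (primesM _ d0 (prime_gt0 pq)) (primes_prime pq) !inE orbC.
by [].
Qed.

Lemma K {d q} : prime q -> 0 < d -> ~~ (q %| d) ->
  squarefree (d * q) = squarefree d /\ moebius (d * q) = (- moebius d)%R.
Proof.
move=> pq d0 nqd.
have pe := primes_Mq pq d0 nqd.
have sq : squarefree (d * q) = squarefree d.
  rewrite /squarefree muln_gt0 d0 prime_gt0 //= (perm_all _ pe) /=.
  rewrite (lognM _ d0 (prime_gt0 pq)) (logn_prime _ pq) eqxx.
  have -> : logn q d = 0.
    by apply/eqP; rewrite eqn0Ngt logn_gt0 mem_primes (negbTE nqd) !andbF.
  rewrite /=; apply: eq_in_all => p; rewrite mem_primes => /and3P [pp _ pd].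
  rewrite (lognM _ d0 (prime_gt0 pq)) (logn_prime _ pq).
  have /negPf -> : p != q by apply: contraNneq nqd => <-.
  by rewrite addn0.
split => //.
rewrite /moebius sq (perm_size pe) /=; case: ifP => _; last by rewrite GRing.oppr0.
by rewrite GRing.exprS GRing.mulN1r.
Qed.

Lemma Urad (a : nat -> int) {n e q} :
  (forall m, 1 < m -> a m = a (radical m)) -> prime q -> q * q %| n -> 0 < n ->
  e * q %| n -> ~~ (q %| e) -> 0 < e -> a (n %/ (e * q)) = a (n %/ e).
Proof.
move=> arad pq qqn n0 eqn nqe e0.
set m := n %/ (e * q).
have nE : n = m * e * q by rewrite -mulnA divnK.
have m0 : 0 < m by move: n0; rewrite nE !muln_gt0 => /andP [/andP []].
have q0 := prime_gt0 pq.
have qm : q %| m.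
  move: qqn; rewrite nE dvdn_pmul2r // Euclid_dvdM // (negbTE nqe) orbF.
  by [].
have -> : n %/ e = m * q by rewrite nE mulnAC mulnK.
have q1 := prime_gt1 pq.
have m1 : 1 < m by apply: leq_trans q1 (dvdn_leq m0 qm).
have mq1 : 1 < m * q by apply: leq_trans m1 (leq_pmulr _ q0).
rewrite (arad _ m1) (arad _ mq1) /radical.
suff -> : primes (m * q) = primes m by [].
apply/eq_primes => p; rewrite (primesM _ m0 q0) (primes_prime pq) inE.
case: eqP => [->|_]; last by rewrite orbF.
by rewrite orbT mem_primes pq m0 qm.
Qed.

Definition toggle q d := if q %| d then d %/ q else d * q.

Lemma Tog (a : nat -> int) {n q d} :
  (forall m, 1 < m -> a m = a (radical m)) -> prime q -> q * q %| n -> 0 < n ->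
  d %| n -> squarefree d ->
  [/\ toggle q d %| n, squarefree (toggle q d),
      moebius (toggle q d) = (- moebius d)%R, toggle q (toggle q d) = d
    & a (n %/ toggle q d) = a (n %/ d)].
Proof.
move=> arad pq qqn n0 dn sd.
have d0 := sqf_gt0 sd.
have q0 := prime_gt0 pq.
have qn : q %| n by apply: dvdn_trans qqn; apply: dvdn_mull.
rewrite /toggle; case: ifP => qd.
- set e := d %/ q.
  have nqe : ~~ (q %| e) by apply: sqf_div.
  have dE : d = e * q by rewrite divnK.
  have e0 : 0 < e by move: d0; rewrite dE muln_gt0 => /andP [].
  have [Ks Km] := K pq e0 nqe.
  rewrite -dE in Ks Km.
  rewrite (negbTE nqe).
  split.
  + by apply: dvdn_trans dn; rewrite dE dvdn_mulr.
  + by rewrite -Ks.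
  + by rewrite Km GRing.opprK.
  + by rewrite dE.
  + by rewrite [in RHS]dE (Urad a arad pq qqn n0) // -dE.
- have nqd : ~~ (q %| d) by rewrite qd.
  have [Ks Km] := K pq d0 nqd.
  have dqn : d * q %| n.
    by rewrite Gauss_dvd ?dn ?qn // coprime_sym prime_coprime.
  split => //.
  + by rewrite Ks.
  + by rewrite dvdn_mull // mulnK.
  + by rewrite (Urad a arad pq qqn n0).
Qed.

End Helpers.

Theorem theorem9 (a : nat -> int) :
  a 1%N = 0 ->
  (forall p : nat, prime p -> ((p : int) %| a p)%Z) ->
  (forall n : nat, (1 < n)%N -> a n = a (radical n)) ->
  forall n : nat, (1 <= n)%N -> (Aplus a n == Aminus a n %[mod (n : int)])%Z.
Proof.
move=> a1 ap arad n n1.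
have n0 : (0 < n)%N := n1.
case: (boolP (squarefree n)) => sn.
- have key : forall s : int, moebius n = - s ->
      ((n : int) %| \prod_(d <- divisors n | moebius d == s) a (n %/ d)%N)%Z.
    move=> s mn.
    rewrite /dvdz /=.
    apply/(dvdn_partP _ n0) => p; rewrite mem_primes => /and3P [pp _ pn].
    have nE : n = (n %/ p * p)%N by rewrite divnK.
    have np0 : (0 < n %/ p)%N.
      by rewrite divn_gt0 ?prime_gt0 // dvdn_leq.
    have lp : logn p n = 1%N.
      case/andP: sn => _ /allP /(_ p); rewrite mem_primes pp n0 pn.
      by move=> /(_ isT) /eqP.
    have -> : (n`_p = p)%N by rewrite p_part lp expn1.
    rewrite -big_filter (bigD1_seq (n %/ p)%N) /=.
    + rewrite abszM dvdn_mulr //.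
      have -> : (n %/ (n %/ p) = p)%N by rewrite {1}nE mulKn.
      exact: ap.
    + rewrite mem_filter -dvdn_divisors //.
      have [_ Km] := K pp np0 (sqf_div sn pp pn).
      rewrite -nE mn in Km.
      rewrite -(GRing.oppr_inj Km) eqxx /=.
      by rewrite {2}nE dvdn_mulr.
    + by rewrite filter_uniq // divisors_uniq.
  have nin : n \in divisors n by rewrite -dvdn_divisors.
  have [m1|m1] : moebius n = 1 \/ moebius n = -1.
    by rewrite /moebius sn -GRing.signr_odd; case: odd; [right; rewrite GRing.expr1 | left; rewrite GRing.expr0].
  + have -> : Aplus a n = 0.
      rewrite /Aplus -big_filter (bigD1_seq n) /=.
      * by rewrite divnn n0 a1 GRing.mul0r.
      * by rewrite mem_filter m1 eqxx nin.
      * by rewrite filter_uniq // divisors_uniq.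
    rewrite eq_sym eqz_mod_dvd GRing.subr0; apply: key.
    by rewrite GRing.opprK.
  + have -> : Aminus a n = 0.
      rewrite /Aminus -big_filter (bigD1_seq n) /=.
      * by rewrite divnn n0 a1 GRing.mul0r.
      * by rewrite mem_filter m1 eqxx nin.
      * by rewrite filter_uniq // divisors_uniq.
    by rewrite eqz_mod_dvd GRing.subr0; apply: key.
- have [q pq qqn] : exists2 q, prime q & (q * q %| n)%N.
    move: sn; rewrite /squarefree n0 /= => /allPn [q qP lq].
    exists q; first by move: qP; rewrite mem_primes => /andP [].
    rewrite mulnn pfactor_dvdn //; first last.
      by move: qP; rewrite mem_primes => /andP [].
    move: (qP); rewrite -logn_gt0.
    by case: (logn q n) lq => [|[|k]].
  suff -> : Aplus a n = Aminus a n by rewrite eqz_mod_dvd GRing.subrr dvdz0.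
  rewrite /Aplus /Aminus -(big_filter (divisors n) (fun d => moebius d == 1)).
  rewrite -(big_filter (divisors n) (fun d => moebius d == -1)).
  set Lp := [seq _ <- _ | _]; set Lm := [seq _ <- _ | _].
  have memL : forall d, d \in Lp -> [/\ (d %| n)%N, squarefree d & moebius d = 1].
    move=> d; rewrite mem_filter => /andP [/eqP md dd].
    split => //; first by rewrite dvdn_divisors.
    by apply: sqf_moeb; rewrite md.
  transitivity (\prod_(d <- map (toggle q) Lp) a (n %/ d)%N).
    rewrite big_map; apply: eq_big_seq => d /memL [dn sd _].
    by case: (Tog a arad pq qqn n0 dn sd).
  apply: perm_big; apply: uniq_perm.
  + rewrite map_inj_in_uniq ?filter_uniq ?divisors_uniq //.
    move=> x y /memL [xn sx _] /memL [yn sy _] e.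
    have [_ _ _ tx _] := Tog a arad pq qqn n0 xn sx.
    have [_ _ _ ty _] := Tog a arad pq qqn n0 yn sy.
    by rewrite -tx e ty.
  + by rewrite filter_uniq // divisors_uniq.
  + move=> x; apply/mapP/idP.
    * move=> [d /memL [dn sd md] ->].
      have [tn _ tm _ _] := Tog a arad pq qqn n0 dn sd.
      by rewrite mem_filter tm md eqxx -dvdn_divisors.
    * rewrite mem_filter => /andP [/eqP mx xd].
      have xn : (x %| n)%N by rewrite dvdn_divisors.
      have sx : squarefree x by apply: sqf_moeb; rewrite mx.
      have [tn _ tm tt _] := Tog a arad pq qqn n0 xn sx.
      exists (toggle q x); last by rewrite tt.
      by rewrite mem_filter tm mx GRing.opprK eqxx -dvdn_divisors.
Qed.
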